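(* If $\Gamma\vdash M:\sigma$ is derivable in $\cap ES$, then $\Gamma\vdash M^{\flat}:\sigma$ is derivable in $\cap J$.
   Context: Terms $\mathtt T_J$: $t,u,r ::= x \mid \lambda x.t \mid t(u,y.r)$ ($y$ bound in $r$), up to $\alpha$-equivalence. ES terms: $M,N,P ::= x \mid \lambda x.M \mid MN \mid M[x\backslash N]$ ($x$ bound in $M$ in $M[x\backslash N]$). Translation $(\cdot)^\flat$: ES $\to\mathtt T_J$: $x^\flat=x$, $(\lambda x.M)^\flat=\lambda x.M^\flat$, $(MN)^\flat=M^\flat(N^\flat,z.z)$, $(M[x\backslash N])^\flat=(\lambda z.z)(N^\flat,x.M^\flat)$ ($z$ fresh). Types $\sigma,\tau ::= \alpha \mid \mathcal M\to\sigma$, $\mathcal M=[\sigma_i]_{i\in I}$ a finite possibly empty multiset; $\sqcup$ multiset union; environments map variables to multisets, $\wedge$ pointwise union, $\Gamma;x:\mathcal M$ extension with $x\notin\mathrm{dom}\,\Gamma$; $\mathrm{ch}(\mathcal M)=\mathcal M$ if $\mathcal M\ne[\,]$, $\mathrm{ch}([\,])=[\tau]$ for an arbitrary $\tau$. Both systems share rules (var) $x:[\sigma]\vdash x:\sigma$; (abs) from $\Gamma;x:\mathcal M\vdash t:\sigma$ infer $\Gamma\vdash\lambda x.t:\mathcal M\to\sigma$; (many) from $(\Gamma_i\vdash t:\sigma_i)_{i\in I}$, $I\ne\emptyset$, infer $\wedge_i\Gamma_i\vdash t:[\sigma_i]_{i\in I}$. $\cap J$ additionally has (app): from $\Gamma\vdash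 t:\mathrm{ch}([\mathcal M_i\to\tau_i]_{i\in I})$, $\Delta\vdash u:\mathrm{ch}(\sqcup_i\mathcal M_i)$, $\Lambda;y:[\tau_i]_{i\in I}\vdash r:\sigma$ infer $\Gamma\wedge\Delta\wedge\Lambda\vdash t(u,y.r):\sigma$. $\cap ES$ additionally has (app): from $\Gamma\vdash M:\mathcal M\to\sigma$ and $\Delta\vdash N:\mathrm{ch}(\mathcal M)$ infer $\Gamma\wedge\Delta\vdash MN:\sigma$; and (sub): from $\Gamma;x:\mathcal M\vdash P:\sigma$ and $\Delta\vdash N:\mathrm{ch}(\mathcal M)$ infer $\Gamma\wedge\Delta\vdash P[x\backslash N]:\sigma$. *)

(* Defs.v *)
From Stdlib Require Import List Arith.
Import ListNotations.

Definition var := nat.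

(** Terms of the J-calculus T_J: x | \x.t | t(u, y.r)  (y bound in r). *)
Inductive tJ : Type :=
| JVar : var -> tJ
| JLam : var -> tJ -> tJ
| JApp : tJ -> tJ -> var -> tJ -> tJ.

(** ES terms: x | \x.M | M N | M[x\N]  (x bound in M). *)
Inductive tES : Type :=
| EVar : var -> tES
| ELam : var -> tES -> tES
| EApp : tES -> tES -> tES
| ESub : tES -> var -> tES -> tES.

(** Translation (.)^flat. The bound variable z is irrelevant up to alpha;
    we use the fixed name 0 (it is only ever bound around the body z). *)
Definition zv : var := 0.
Fixpoint flat (M : tES) : tJ :=
  match M with
  | EVar x => JVar x
  | ELam x M => JLam x (flat M)
  | EApp M N => JApp (flat M) (flat N) zv (JVar zv)
  | ESub M x N => JApp (JLam zv (JVar zv)) (flat N) x (flat M)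
  end.

(** Types: sigma ::= alpha | Mset -> sigma, multisets represented by lists,
    identified up to (nested) permutation via [ty_eq]/[mty_eq]. *)
Inductive ty : Type :=
| TVar : nat -> ty
| TArr : list ty -> ty -> ty.

Definition mty := list ty.

Inductive ty_eq : ty -> ty -> Prop :=
| teq_var a : ty_eq (TVar a) (TVar a)
| teq_arr M M' s s' : mty_eq M M' -> ty_eq s s' -> ty_eq (TArr M s) (TArr M' s')
with mty_eq : mty -> mty -> Prop :=
| meq_nil : mty_eq [] []
| meq_skip s s' M M' : ty_eq s s' -> mty_eq M M' -> mty_eq (s :: M) (s' :: M')
| meq_swap s t M : mty_eq (s :: t :: M) (t :: s :: M)
| meq_trans M1 M2 M3 : mty_eq M1 M2 -> mty_eq M2 M3 -> mty_eq M1 M3.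

(** Environments: variables to multisets; dom G = {x | G x <> []}. *)
Definition env := var -> mty.
Definition env_eq (G D : env) : Prop := forall x, mty_eq (G x) (D x).
Definition env_empty : env := fun _ => [].
Definition env_union (G D : env) : env := fun x => G x ++ D x.
Definition env_single (x : var) (s : ty) : env :=
  fun y => if Nat.eqb y x then [s] else [].
(** [env_ext G x M] is G;x:M, used only when x is not in dom G (G x = []). *)
Definition env_ext (G : env) (x : var) (M : mty) : env :=
  fun y => if Nat.eqb y x then M else G y.

Inductive chR : mty -> mty -> Prop :=
| ch_ne M : M <> [] -> chR M M
| ch_nil tau : chR [] [tau].

(** The conversion rules express that
    types and environments are multisets (lists up to permutation). *)
Inductive typJ : env -> tJ -> ty -> Prop :=
| J_var x s : typJ (env_single x s) (JVar x) s
| J_abs G x M t s :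
    G x = [] -> typJ (env_ext G x M) t s -> typJ G (JLam x t) (TArr M s)
| J_app G D L t u y r s (ps : list (mty * ty)) A B :
    chR (map (fun p => TArr (fst p) (snd p)) ps) A ->
    mtypJ G t A ->
    chR (concat (map fst ps)) B ->
    mtypJ D u B ->
    L y = [] ->
    typJ (env_ext L y (map snd ps)) r s ->
    typJ (env_union G (env_union D L)) (JApp t u y r) s
| J_conv G G' t s s' : env_eq G G' -> ty_eq s s' -> typJ G t s -> typJ G' t s'
with mtypJ : env -> tJ -> mty -> Prop :=
| J_many1 G t s : typJ G t s -> mtypJ G t [s]
| J_manyS G D t s M : typJ G t s -> mtypJ D t M -> mtypJ (env_union G D) t (s :: M)
| J_mconv G G' t M M' : env_eq G G' -> mty_eq M M' -> mtypJ G t M -> mtypJ G' t M'.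

Inductive typES : env -> tES -> ty -> Prop :=
| E_var x s : typES (env_single x s) (EVar x) s
| E_abs G x M t s :
    G x = [] -> typES (env_ext G x M) t s -> typES G (ELam x t) (TArr M s)
| E_app G D M N Ms Ms' s :
    typES G M (TArr Ms s) -> chR Ms Ms' -> mtypES D N Ms' ->
    typES (env_union G D) (EApp M N) s
| E_sub G D P x N Ms Ms' s :
    G x = [] -> typES (env_ext G x Ms) P s -> chR Ms Ms' -> mtypES D N Ms' ->
    typES (env_union G D) (ESub P x N) s
| E_conv G G' t s s' : env_eq G G' -> ty_eq s s' -> typES G t s -> typES G' t s'
with mtypES : env -> tES -> mty -> Prop :=
| E_many1 G t s : typES G t s -> mtypES G t [s]
| E_manyS G D t s M : typES G t s -> mtypES D t M -> mtypES (env_union G D) t (s :: M)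
| E_mconv G G' t M M' : env_eq G G' -> mty_eq M M' -> mtypES G t M -> mtypES G' t M'.

(* Main.v *)
Require Import Defs.
From Stdlib Require Import List Arith Permutation.
Import ListNotations.

Fixpoint ty_refl (t : ty) : ty_eq t t :=
  match t with
  | TVar a => teq_var a
  | TArr M s =>
      teq_arr M M s s
        ((fix mr (l : list ty) : mty_eq l l :=
            match l with
            | [] => meq_nil
            | x :: l' => meq_skip x x l' l' (ty_refl x) (mr l')
            end) M) (ty_refl s)
  end.

Lemma mty_refl (l : mty) : mty_eq l l.
Proof. induction l; constructor; auto using ty_refl. Qed.

Lemma perm_mty (l l' : mty) : Permutation l l' -> mty_eq l l'.
Proof.
  induction 1.
  - constructor.
  - apply meq_skip; [apply ty_refl|assumption].
  - apply meq_swap.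
  - eapply meq_trans; eassumption.
Qed.

Scheme typES_mut := Induction for typES Sort Prop
with mtypES_mut := Induction for mtypES Sort Prop.

Definition idJ := JLam zv (JVar zv).

Lemma id_typ (t : ty) : typJ env_empty idJ (TArr [t] t).
Proof.
  apply J_abs; [reflexivity|]. exact (J_var zv t).
Qed.

Lemma id_mtyp (l : list ty) : l <> [] ->
  mtypJ env_empty idJ (map (fun t => TArr [t] t) l).
Proof.
  induction l as [|a l IH]; intros H; [congruence|].
  destruct l as [|b l].
  - simpl. apply J_many1, id_typ.
  - eapply J_mconv with (G := env_union env_empty env_empty).
    + intro x; apply mty_refl.
    + apply mty_refl.
    + apply J_manyS; [apply id_typ|]. apply IH; discriminate.
Qed.

Lemma concat_single (l : list ty) :
  concat (map fst (map (fun t => ([t], t)) l)) = l.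
Proof. induction l; simpl; congruence. Qed.

Lemma snd_single (l : list ty) :
  map snd (map (fun t => ([t], t)) l) = l.
Proof. induction l; simpl; congruence. Qed.

Theorem mainTheorem18 (G : env) (M : tES) (s : ty) :
  typES G M s -> typJ G (flat M) s.
Proof.
  intro H.
  apply (typES_mut (fun G M s _ => typJ G (flat M) s)
                   (fun G M Ms _ => mtypJ G (flat M) Ms)); simpl; intros.
  - apply J_var.
  - apply J_abs; auto.
  - eapply J_conv with (G := env_union G0 (env_union D env_empty)).
    + intro x; unfold env_union, env_empty; rewrite app_nil_r; apply mty_refl.
    + apply ty_refl.
    + eapply J_app with (ps := [(Ms, s0)]) (A := [TArr Ms s0]) (L := env_empty).
      * constructor; discriminate.
      * apply J_many1; eauto.
      * simpl; rewrite app_nil_r; exact c.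
      * eauto.
      * reflexivity.
      * exact (J_var zv s0).
  - eapply J_conv with (G := env_union env_empty (env_union D G0)).
    + intro y; unfold env_union, env_empty; simpl; apply perm_mty, Permutation_app_comm.
    + apply ty_refl.
    + destruct Ms as [|a l].
      * inversion c; subst; [congruence|].
        eapply J_app with (ps := []) (A := [TArr [TVar 0] (TVar 0)]).
        -- constructor.
        -- apply J_many1, id_typ.
        -- simpl. apply ch_nil.
        -- eauto.
        -- exact e.
        -- exact H0.
      * inversion c; subst.
        eapply J_app with (ps := map (fun t => ([t], t)) (a :: l)) (B := a :: l).
        -- constructor. discriminate.
        -- rewrite map_map. simpl. apply (id_mtyp (a :: l)); discriminate.
        -- rewrite concat_single. apply ch_ne; discriminate.
        -- eauto.
        -- exact e.
        -- rewrite snd_single. exact H0.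
  - eapply J_conv; eauto.
  - apply J_many1; auto.
  - apply J_manyS; auto.
  - eapply J_mconv; eauto.
  - exact H.
Qed.
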